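(* For every integer $k\ge 2$, $M_k(3)\le 2^k$.
   Context: All graphs are finite and simple. A path $v_1,\ldots,v_r$ in a graph $G$ is degree-monotone if $\deg_G(v_1)\le\cdots\le\deg_G(v_r)$; its order is $r$. Let $mp(G)$ be the maximum order of a degree-monotone path in $G$. For a $k$-edge-coloring of $K_n$ with colors $1,\ldots,k$, let $G_j$ be the spanning subgraph consisting of the edges colored $j$ (degrees taken in $G_j$). $M_k(m)$ is the minimum integer $M$ such that for every $n\ge M$ and every $k$-edge-coloring of $K_n$ there is some $j$ with $mp(G_j)\ge m$. *)

(* Defs.v *)
From mathcomp Require Import all_boot.
Set Implicit Arguments. Unset Strict Implicit. Unset Printing Implicit Defensive.

(* A simple graph on vertex set 'I_n is given by a symmetric irreflexive
   adjacency relation. *)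
Definition deg (n : nat) (adj : rel 'I_n) (v : 'I_n) : nat :=
  #|[set u | adj v u]|.

Definition dm_path (n : nat) (adj : rel 'I_n) (s : seq 'I_n) : bool :=
  [&& uniq s,
      (if s is x :: s' then path adj x s' else true)
    & sorted leq (map (deg adj) s)].

Definition mp (n : nat) (adj : rel 'I_n) : nat :=
  \max_(r < n.+1 | [exists t : r.-tuple 'I_n, dm_path adj t]) r.

(* A k-edge-coloring of K_n: a symmetric map c giving color c u v to the
   edge uv (u <> v; values on the diagonal are irrelevant).  Colors are
   'I_k (standing for 1..k). *)
Definition colG (n k : nat) (c : 'I_n -> 'I_n -> 'I_k) (j : 'I_k) : rel 'I_n :=
  fun u v => (u != v) && (c u v == j).

(* Main.v *)
Require Import Defs.
From mathcomp Require Import all_boot zify.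
Set Implicit Arguments. Unset Strict Implicit. Unset Printing Implicit Defensive.

Definition keylt n (adj : rel 'I_n) (x y : 'I_n) :=
  (deg adj x < deg adj y) || ((deg adj x == deg adj y) && (x < y)).
Definition bitv n (adj : rel 'I_n) (v : 'I_n) :=
  [exists w, adj v w && keylt adj w v].

Lemma div_lt a b L : 0 < a -> a < b -> a %| L -> b %| L -> 0 < L -> L %/ b < L %/ a.
Proof.
move=> a0 ab /divnK ha /divnK hb L0.
move: (L %/ a) (L %/ b) ha hb => p q ha hb.
rewrite ltnNge; apply/negP => pq.
have q0 : 0 < q by case: q hb {pq}; lia.
have : p * a <= q * a by rewrite leq_mul2r pq orbT.
have : q * a < q * b by rewrite ltn_mul2l q0 ab.
lia.
Qed.
Lemma sum_lt (I : finType) (F G : I -> nat) i0 : (forall i, F i <= G i) -> F i0 < G i0 -> \sum_i F i < \sum_i G i.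
Proof. move=> h h0; rewrite (bigD1 i0) //= [X in _ < X](bigD1 i0) //=; rewrite -addSn leq_add //; apply: leq_sum => i _; exact: h. Qed.

Lemma sum_if_const (I : finType) (P : pred I) x :
  \sum_i (if P i then x else 0) = #|[set i | P i]| * x.
Proof.
rewrite -big_mkcond /= -sum_nat_const; apply: eq_bigl => i; by rewrite inE.
Qed.

Lemma deg_le n (adj : rel 'I_n) u : deg adj u <= n.
Proof. by rewrite /deg; apply: leq_trans (max_card _) _; rewrite card_ord. Qed.

Section Col.
Variable n : nat.
Variable adj : rel 'I_n.
Hypothesis adj_sym : forall u v, adj u v = adj v u.
Hypothesis adj_irr : forall u, adj u u = false.
Hypothesis no3 : forall x y z, x != z -> adj x y -> adj y z ->
  deg adj x <= deg adj y -> deg adj y <= deg adj z -> False.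

Lemma keylt_asym x y : keylt adj x y -> keylt adj y x -> False.
Proof.
rewrite /keylt => /orP[h|/andP[/eqP h1 h2]] /orP[h'|/andP[/eqP h1' h2']]; lia.
Qed.

Lemma keylt_total x y : x != y -> keylt adj x y || keylt adj y x.
Proof.
move=> nxy; rewrite /keylt.
case: (ltngtP (deg adj x) (deg adj y)) => //= e.
case: (ltngtP x y) => // /val_inj h.
by rewrite h eqxx in nxy.
Qed.

Lemma keylt_le x y : keylt adj x y -> deg adj x <= deg adj y.
Proof. by rewrite /keylt => /orP[/ltnW|/andP[/eqP -> _]]. Qed.

Lemma L1 u v : adj u v -> keylt adj u v -> bitv adj u = false.
Proof.
move=> auv kuv; apply/negbTE/existsP => -[w /andP[auw kwu]].
have wv : w != v.
  apply/eqP=> e; subst w; exact: (keylt_asym kuv kwu).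
apply: (no3 wv _ auv (keylt_le kwu) (keylt_le kuv)).
by rewrite adj_sym.
Qed.

Lemma L2 u v : adj u v -> keylt adj u v -> bitv adj v = true.
Proof.
by move=> auv kuv; apply/existsP; exists u; rewrite adj_sym auv kuv.
Qed.

Lemma adj_neq u v : adj u v -> u != v.
Proof. by move=> a; apply/eqP => e; subst; rewrite adj_irr in a. Qed.

Lemma bit_diff u v : adj u v -> bitv adj u != bitv adj v.
Proof.
move=> auv; case/orP: (keylt_total (adj_neq auv)) => k.
  by rewrite (L1 auv k) (L2 auv k).
have avu : adj v u by rewrite adj_sym.
by rewrite (L1 avu k) (L2 avu k).
Qed.

Lemma A_up u w : bitv adj u = false -> adj u w -> keylt adj u w.
Proof.
move=> bu auw; case/orP: (keylt_total (adj_neq auw)) => // k.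
have awu : adj w u by rewrite adj_sym.
by rewrite (L2 awu k) in bu.
Qed.

Lemma edge_le u v : bitv adj u = false -> adj u v -> deg adj u <= deg adj v.
Proof. by move=> bu auv; apply: keylt_le; apply: A_up. Qed.

Lemma bit_false_of u v : bitv adj v = true -> adj u v -> bitv adj u = false.
Proof.
move=> bv auv; have := bit_diff auv; rewrite bv; by case: (bitv adj u).
Qed.

Lemma strict_exists v : 2 <= deg adj v ->
  exists a b, [/\ adj a b, bitv adj a = false & deg adj a < deg adj b].
Proof.
rewrite /deg => /card_gt1P [w1 [w2 []]]; rewrite !inE => a1 a2 w12.
case bv: (bitv adj v).
- have b1 : bitv adj w1 = false by apply: (bit_false_of bv); rewrite adj_sym.
  have b2 : bitv adj w2 = false by apply: (bit_false_of bv); rewrite adj_sym.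
  have l1 := edge_le b1 (_ : adj w1 v).
  have l2 := edge_le b2 (_ : adj w2 v).
  exists w1, v; split => //; first by rewrite adj_sym.
  rewrite ltnNge; apply/negP => h.
  apply: (no3 (_ : w2 != w1) _ a1 _ h); first by rewrite eq_sym.
  - by rewrite adj_sym.
  - by apply: l2; rewrite adj_sym.
- have l1 := edge_le bv a1; have l2 := edge_le bv a2.
  exists v, w1; split => //.
  rewrite ltnNge; apply/negP => h.
  apply: (no3 w12 _ a2 h l2); by rewrite adj_sym.
Qed.
Lemma count_contra
  (deg_pos : forall u, 0 < deg adj u)
  (card_eq : #|[set u | ~~ bitv adj u]| = #|[set u | bitv adj u]|)
  a b : adj a b -> bitv adj a = false -> deg adj a < deg adj b -> False.
Proof.
move=> aab ba dab.
pose L := n`!.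
have dL u : deg adj u %| L by apply: dvdn_fact; rewrite deg_pos deg_le.
have L0 : 0 < L := fact_gt0 n.
have cnt u x : \sum_v (if adj u v then x else 0) = deg adj u * x.
  by rewrite sum_if_const.
have h1 : \sum_u \sum_v (if ~~ bitv adj u && adj u v then L %/ deg adj u else 0)
    = #|[set u | ~~ bitv adj u]| * L.
  rewrite -sum_if_const; apply: eq_bigr => u _.
  case: (bitv adj u) => /=; first by rewrite big1.
  by rewrite cnt mulnC divnK.
have h2 : \sum_u \sum_v (if ~~ bitv adj u && adj u v then L %/ deg adj u else 0)
    = \sum_v \sum_u (if bitv adj v && adj u v then L %/ deg adj u else 0).
  rewrite exchange_big; apply: eq_bigr => v _; apply: eq_bigr => u _.
  case e: (adj u v); rewrite ?andbF ?andbT //.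
  by have := bit_diff e; case: (bitv adj u); case: (bitv adj v).
have h3 : \sum_v \sum_u (if bitv adj v && adj u v then L %/ deg adj v else 0)
    = #|[set u | bitv adj u]| * L.
  rewrite -sum_if_const; apply: eq_bigr => v _.
  case: (bitv adj v) => /=; last by rewrite big1.
  rewrite (eq_bigr (fun u => if adj v u then L %/ deg adj v else 0)).
    by rewrite cnt mulnC divnK.
  by move=> u _; rewrite adj_sym.
have h4 : \sum_v \sum_u (if bitv adj v && adj u v then L %/ deg adj v else 0)
    < \sum_v \sum_u (if bitv adj v && adj u v then L %/ deg adj u else 0).
  apply: (sum_lt (i0 := b)).
    move=> v; apply: leq_sum => u _.
    case e: (bitv adj v && adj u v) => //.
    case/andP: e => bv auv.
    apply: leq_div2l; first exact: deg_pos.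
    exact: (edge_le (bit_false_of bv auv) auv).
  have bb : bitv adj b = true.
    by have := bit_diff aab; rewrite ba; case: (bitv adj b).
  apply: (sum_lt (i0 := a)).
    move=> u; case e: (bitv adj b && adj u b) => //.
    case/andP: e => bv auv.
    apply: leq_div2l; first exact: deg_pos.
    exact: (edge_le (bit_false_of bv auv) auv).
  rewrite bb aab /=; apply: div_lt => //; exact: deg_pos.
move: h4; rewrite h3 -h2 h1 card_eq ltnn //.
Qed.
End Col.

Lemma mp_ge3 n (adj : rel 'I_n) x y z : 3 <= n -> uniq [:: x; y; z] ->
  adj x y -> adj y z -> deg adj x <= deg adj y -> deg adj y <= deg adj z ->
  3 <= mp adj.
Proof.
move=> n3 u axy ayz d1 d2; rewrite /mp.
have H : 3 < n.+1 by [].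
apply: (@leq_bigmax_cond _ _ (fun r : 'I_n.+1 => nat_of_ord r) (Ordinal H)).
apply/existsP; exists [tuple x; y; z].
apply/and3P; split => //=; first by rewrite axy ayz.
by rewrite d1 d2.
Qed.

Lemma pow_small k : 1 < k -> (2 ^ k).-1 <= k -> False.
Proof.
case: k => // k' hk; rewrite expnS -subn1 => h.
have := ltn_expl k' (_ : 1 < 2); lia.
Qed.

Theorem proposition3p4 (k : nat) (hk : 2 <= k) (n : nat) (hn : 2 ^ k <= n)
  (c : 'I_n -> 'I_n -> 'I_k) (csym : forall u v, c u v = c v u) :
  exists j : 'I_k, 3 <= mp (colG c j).
Proof.
have n4 : 4 <= n by apply: leq_trans hn; exact: (@leq_pexp2l 2 2 k).
case: (boolP [exists j, 3 <= mp (colG c j)]) => [/existsP//|/existsPn hall].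
exfalso.
have sym j u v : colG c j u v = colG c j v u by rewrite /colG eq_sym csym.
have irr j u : colG c j u u = false by rewrite /colG eqxx.
have no3 j x y z : x != z -> colG c j x y -> colG c j y z ->
    deg (colG c j) x <= deg (colG c j) y -> deg (colG c j) y <= deg (colG c j) z -> False.
  move=> xz a1 a2 d1 d2.
  move/negP: (hall j); apply.
  apply: (mp_ge3 _ _ a1 a2 d1 d2); first lia.
  rewrite /= !inE negb_or xz (adj_neq (irr j) a1) (adj_neq (irr j) a2) //.
pose phi v : {ffun 'I_k -> bool} := [ffun j => bitv (colG c j) v].
have phi_inj : injective phi.
  move=> u v e; apply/eqP; apply/negPn/negP => nuv.
  have a : colG c (c u v) u v by rewrite /colG nuv eqxx.
  have := bit_diff (sym (c u v)) (irr (c u v)) (@no3 (c u v)) a.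
  by have := congr1 (fun f : {ffun 'I_k -> bool} => f (c u v)) e; rewrite !ffunE => ->; rewrite eqxx.
have nle : n <= 2 ^ k.
  by have := leq_card _ phi_inj; rewrite card_ord card_ffun card_bool card_ord.
have nk : n = 2 ^ k by apply/eqP; rewrite eqn_leq nle hn.
have onto := inj_card_onto phi_inj (_ : _ <= _).
have onto' : forall y, y \in codom phi by apply: onto; rewrite card_ord card_ffun card_bool card_ord nk.
have n0 : 0 < n by lia.
pose v0 := Ordinal n0.
have [j0 hj0] : exists j0, 1 < deg (colG c j0) v0.
  case: (boolP [exists j, 1 < deg (colG c j) v0]) => [/existsP//|/existsPn hle].
  have inj : {in [set~ v0] &, injective (c v0)}.
    move=> u1 u2; rewrite !inE => n1 n2 e.
    have := hle (c v0 u1); rewrite -leqNgt /deg => /card_le1_eqP; apply.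
      by rewrite inE /colG eq_sym n2 e eqxx.
    by rewrite inE /colG eq_sym n1 eqxx.
  have := card_in_imset inj; rewrite cardsC1 card_ord => e.
  have := max_card (c v0 @: [set~ v0]); rewrite e card_ord => h.
  by exfalso; move: h; rewrite nk; apply: pow_small.
pose A := colG c j0.
pose flip (f : {ffun 'I_k -> bool}) := [ffun i => if i == j0 then ~~ f i else f i].
pose sg u := iinv (onto' (flip (phi u))).
have phis u : phi (sg u) = flip (phi u) by rewrite /sg f_iinv.
have bsg u : bitv A (sg u) = ~~ bitv A u.
  by have := congr1 (fun f : {ffun 'I_k -> bool} => f j0) (phis u); rewrite !ffunE eqxx.
have adjsg u : A u (sg u).
  have nu : u != sg u.
    apply/eqP => e; have := bsg u; rewrite -e; by case: (bitv A u).
  have a : colG c (c u (sg u)) u (sg u) by rewrite /colG nu eqxx.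
  have := bit_diff (sym _) (irr _) (@no3 _) a.
  have E : bitv (colG c (c u (sg u))) (sg u) = (if c u (sg u) == j0 then
      ~~ bitv (colG c (c u (sg u))) u else bitv (colG c (c u (sg u))) u).
    by have := congr1 (fun f : {ffun 'I_k -> bool} => f (c u (sg u))) (phis u);
      rewrite /phi /flip !ffunE.
  rewrite E; case: (c u (sg u) =P j0) => [e' _|_]; last by rewrite eqxx.
  by rewrite /A /colG nu e' eqxx.
have deg_pos u : 0 < deg A u.
  by rewrite /deg; apply/card_gt0P; exists (sg u); rewrite inE.
have sgK : involutive sg.
  move=> u; apply: phi_inj; rewrite !phis; apply/ffunP => i; rewrite !ffunE.
  by case: (i == j0); rewrite ?negbK.
have sg_inj : injective sg := inv_inj sgK.
have sub b : sg @: [set u | bitv A u == b] \subset [set u | bitv A u == ~~ b].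
  apply/subsetP => x /imsetP [u]; rewrite !inE => /eqP <- ->.
  by rewrite bsg.
have card_eq : #|[set u | ~~ bitv A u]| = #|[set u | bitv A u]|.
  have e1 : [set u | ~~ bitv A u] = [set u | bitv A u == false].
    by apply/setP => u; rewrite !inE; case: (bitv A u).
  have e2 : [set u | bitv A u] = [set u | bitv A u == true].
    by apply/setP => u; rewrite !inE; case: (bitv A u).
  rewrite e1 e2; apply/eqP; rewrite eqn_leq.
  have := subset_leq_card (sub false); rewrite card_imset //= => ->.
  by have := subset_leq_card (sub true); rewrite card_imset.
have [a [b [aab ba dab]]] := strict_exists (sym j0) (irr j0) (@no3 j0) hj0.
exact: (count_contra (sym j0) (irr j0) (@no3 j0) deg_pos card_eq aab ba dab).
Qed.
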